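(* Let $n\ge 1$, $V=(\mathbb F_2)^n$, let $r\ge 1$ and let $\rho_1,\dots,\rho_r\in\mathrm{Sym}(V)$. Let $\Phi$ be the $r$-round long-key Feistel network whose encryption functions are \[ E_{(k_1,\dots,k_r)}=\bar\rho_1\sigma_{(0,k_1)}\bar\rho_2\sigma_{(0,k_2)}\cdots\bar\rho_r\sigma_{(0,k_r)},\qquad (k_1,\dots,k_r)\in V^r, \] and let $\Gamma(\Phi)=\langle E_{(k_1,\dots,k_r)}\mid (k_1,\dots,k_r)\in V^r\rangle\le \mathrm{Sym}(V\times V)$. Then \[ \langle \bar\rho_1\bar\rho_2\cdots\bar\rho_r,\ T(V\times V)\rangle \le \Gamma(\Phi). \] In particular $T(V\times V)\le\Gamma(\Phi)$.
   Context: Maps act on the right ($x\mapsto xf$) and products of maps are composed left to right ($fg$ means first $f$, then $g$); $+$ is bitwise XOR on $V$. For $\rho\in\mathrm{Sym}(V)$, the Feistel operator induced by $\rho$ is the map $\bar\rho: V\times V\to V\times V$, $(x_1,x_2)\bar\rho=(x_2,\ x_1+x_2\rho)$. For $(h,k)\in V\times V$, $\sigma_{(h,k)}:V\times V\to V\times V$ is defined by $(x_1,x_2)\sigma_{(h,k)}=(x_1+k,\ x_2+h)$, and $T(V\times V)=\{\sigma_{(h,k)}\mid (h,k)\in V\times V\}$. *)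

(* Defs.v *)
From HB Require Import structures.
From mathcomp Require Import all_boot all_order all_algebra all_fingroup.
Set Implicit Arguments. Unset Strict Implicit. Unset Printing Implicit Defensive.
Import GRing.Theory.

Definition V (n : nat) := 'rV['F_2]_n.

Section Feistel.
Variable n : nat.
Local Open Scope ring_scope.

Definition feistel_fun (rho : {perm V n}) (x : V n * V n) : V n * V n :=
  (x.2, x.1 + rho x.2).

Lemma feistel_fun_inj rho : injective (feistel_fun rho).
Proof.
move=> [a b] [c d] [/= Ebd Eac]; rewrite Ebd in Eac.
by rewrite (addIr _ Eac) Ebd.
Qed.

Definition feistel (rho : {perm V n}) : {perm V n * V n} :=
  perm (@feistel_fun_inj rho).

(* Translation sigma_(h,k): (x1,x2) |-> (x1 + k, x2 + h). *)
Definition sigma_fun (hk : V n * V n) (x : V n * V n) : V n * V n :=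
  (x.1 + hk.2, x.2 + hk.1).

Lemma sigma_fun_inj hk : injective (sigma_fun hk).
Proof. by move=> [a b] [c d] [/= /addIr -> /addIr ->]. Qed.

Definition sigma (hk : V n * V n) : {perm V n * V n} := perm (@sigma_fun_inj hk).

Definition transl_group : {set {perm V n * V n}} := [set sigma hk | hk : V n * V n].

(* Encryption function E_(k_1..k_r) = rhobar_1 sigma_(0,k_1) ... rhobar_r sigma_(0,k_r);
   mathcomp permutation product s * t means "first s, then t". *)
Definition encrypt (r : nat) (rho : 'I_r -> {perm V n}) (k : {ffun 'I_r -> V n})
  : {perm V n * V n} :=
  (\prod_(i < r) (feistel (rho i) * sigma (0, k i)))%g.

Definition Gamma (r : nat) (rho : 'I_r -> {perm V n}) : {set {perm V n * V n}} :=
  <<[set encrypt rho k | k : {ffun 'I_r -> V n}]>>%g.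

End Feistel.

(* Main.v *)
Require Import Defs.
From mathcomp Require Import all_boot all_order all_algebra all_fingroup.
Import GRing.Theory.

Section Aux.
Variable n : nat.

Lemma sigma0 : sigma (0%R, 0%R) = (1 : {perm V n * V n})%g.
Proof. by apply/permP => -[a b]; rewrite permE perm1 /sigma_fun /= !GRing.addr0. Qed.

Lemma sigmaM (a b : V n * V n) : (sigma a * sigma b)%g = sigma (a.1 + b.1, a.2 + b.2)%R.
Proof.
apply/permP => -[x y]; rewrite permM !permE /sigma_fun /=.
by rewrite !GRing.addrA.
Qed.

Lemma sigma_feistel (rho : {perm V n}) (h : V n) :
  (sigma (0%R, h) * feistel rho)%g = (feistel rho * sigma (h, 0%R))%g.
Proof.
apply/permP => -[x y]; rewrite !permM !permE /sigma_fun /feistel_fun /=.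
by rewrite !GRing.addr0 GRing.addrAC.
Qed.
End Aux.

Theorem lemma4p1 (n : nat) (hn : 0 < n) (r : nat) (hr : 0 < r)
  (rho : 'I_r -> {perm V n}) :
  (<<(\prod_(i < r) feistel (rho i)) |: transl_group n>> \subset Gamma rho)%g
  /\ (transl_group n \subset Gamma rho)%g.
Proof.
case: r hr rho => // r' _ rho.
have Ein : forall k, (encrypt rho k \in Gamma rho)%g.
  by move=> k; apply: mem_gen; apply: imset_f.
set P := (\prod_(i < r'.+1) feistel (rho i))%g.
have PE : encrypt rho [ffun _ => 0%R] = P.
  rewrite /encrypt /P; apply: eq_bigr => i _.
  by rewrite ffunE sigma0 mulg1.
have Pin : (P \in Gamma rho)%g by rewrite -PE.
have S2 : forall k : V n, (sigma (0%R, k) \in Gamma rho)%g.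
  move=> k.
  have E : encrypt rho [ffun i => if i == ord_max then k else 0%R] = (P * sigma (0%R, k))%g.
    rewrite /encrypt /P !big_ord_recr /= ffunE eqxx -[RHS]mulgA; congr (_ * _)%g.
    - apply: eq_bigr => i _; rewrite ffunE.
      have -> : (widen_ord (leqnSn r') i == ord_max) = false.
        by apply/negbTE; rewrite neq_ltn /= ltn_ord.
      by rewrite sigma0 mulg1.
  have -> : sigma (0%R, k) = (P^-1 * encrypt rho [ffun i => if i == ord_max then k else 0%R])%g.
    by rewrite E mulgA mulVg mul1g.
  by apply: groupM; [apply: groupVr; exact: Pin | exact: Ein].
have S1 : forall h : V n, (sigma (h, 0%R) \in Gamma rho)%g.
  move=> h.
  move: rho Ein @P PE Pin S2; case: r' => [|r''] rho Ein P PE Pin S2.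
    have PF : P = feistel (rho ord0) by rewrite /P big_ord1.
    have -> : sigma (h, 0%R) = (P^-1 * sigma (0%R, h) * P)%g.
      by rewrite -mulgA PF sigma_feistel mulgA mulVg mul1g.
    by apply: groupM; [apply: groupM; [apply: groupVr; exact: Pin | exact: S2] | exact: Pin].
  set k := [ffun i : 'I_r''.+2 => if val i == r'' then h else 0%R].
  have E : encrypt rho k = (P * sigma (h, 0%R))%g.
    rewrite /encrypt /P !big_ord_recr /= !ffunE /= eqxx.
    have -> : (r''.+1 == r'') = false by rewrite gtn_eqF.
    rewrite sigma0 mulg1.
    rewrite -!mulgA; congr (_ * _)%g.
      apply: eq_bigr => i _; rewrite ffunE /=.
      by rewrite (ltn_eqF (ltn_ord i)) sigma0 mulg1.
    by rewrite sigma_feistel.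
  have -> : sigma (h, 0%R) = (P^-1 * encrypt rho k)%g.
    by rewrite E mulgA mulVg mul1g.
  by apply: groupM; [apply: groupVr; exact: Pin | exact: Ein].
have T : (transl_group n \subset Gamma rho)%g.
  apply/subsetP => x /imsetP [[h k] _ ->].
  have -> : sigma (h, k) = (sigma (h, 0%R) * sigma (0%R, k))%g.
    by rewrite sigmaM /= GRing.addr0 GRing.add0r.
  by apply: groupM; [exact: S1 | exact: S2].
split => //.
rewrite gen_subG; apply/subsetP => x; rewrite in_setU1 => /orP [/eqP -> //|].
by move/(subsetP T).
Qed.
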